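(* For every $k\in\mathbb{N}_+$ and $x\in(0,\infty)$: (1) $\mathcal{M}_{k,k}(x)\cdot\mathcal{M}_{k,k}\big(1/s(x)\big)=1$; (2) $\mathcal{M}_{k+1,k}(x)\cdot\mathcal{M}_{k+1,k}(x^{-1})=1$.
   Context: For $x>0$, $\omega=\sqrt{8x+1}$, $c(x)=\frac{(\omega+3)^2}{16}$, $d(x)=\frac{(\omega+3)^2}{8(\omega+1)}$, $s(x)=\frac{(\omega-1)^2}{4(\omega+7)}$; $s_0=\mathrm{id}$, $s_{-1}(x)=1/s(1/x)$, $s_i=s\circ s_{i-1}$, $s_{-i}=s_{-1}\circ s_{-(i-1)}$ ($i\in\mathbb{N}_+$); $c_j=c\circ s_j$, $d_j=d\circ s_j$. Product convention: $\prod_{i=0}^kh_i=h_0\cdots h_k$ for $k\ge0$, $=1$ for $k=-1$, $=h_{k+1}^{-1}\cdots h_{-1}^{-1}$ for $k\le-2$. Let $m^{\rm def}(x)$, $n^{\rm def}(x)$ be the sequences with $m^{\rm def}_{k+1}(x)-m^{\rm def}_k(x)=\prod_{i=0}^k(c_i(x)-1)$, $\lim_{k\to-\infty}m^{\rm def}_k(x)=0$, and $n^{\rm def}_k(x)-n^{\rm def}_{k+1}(x)=x\prod_{i=0}^k(d_i(x)-1)$, $\lim_{k\to\infty}n^{\rm def}_k(x)=0$ (these are the $m,n$ components of the unique positive ABMN solution with $m_{-\infty}=n_\infty=0$, $m_0-m_{-1}=1$ and central ratio $x$). For $p\in\mathbb{N}_+$, $r\in\mathbb{N}_+$, the finite-trail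 Mina margin map is $\mathcal{M}_{p,r}(x)=\frac{n^{\rm def}_{-p}(x)-n^{\rm def}_{r}(x)}{m^{\rm def}_{r}(x)-m^{\rm def}_{-p}(x)}$ (equivalently, this ratio for any ABMN solution on $\llbracket -p+1,r-1\rrbracket$ with central ratio $x$). *)

(* Defs.v *)
From Stdlib Require Import Reals ZArith Lia Lra.
Open Scope R_scope.

Definition omega (x : R) : R := sqrt (8 * x + 1).
Definition cf (x : R) : R := (omega x + 3) ^ 2 / 16.
Definition df (x : R) : R := (omega x + 3) ^ 2 / (8 * (omega x + 1)).
Definition sf (x : R) : R := (omega x - 1) ^ 2 / (4 * (omega x + 7)).

Definition sm1 (x : R) : R := / sf (/ x).

Fixpoint iterR (f : R -> R) (n : nat) (x : R) : R :=
  match n with O => x | S n' => f (iterR f n' x) end.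

Definition sZ (j : Z) (x : R) : R :=
  match j with
  | Z0 => x
  | Zpos p => iterR sf (Pos.to_nat p) x
  | Zneg p => iterR sm1 (Pos.to_nat p) x
  end.

Fixpoint prod_nat (f : nat -> R) (n : nat) : R :=
  match n with O => 1 | S n' => prod_nat f n' * f n' end.

(* Product convention of the paper:
   prod_{i=0}^k h_i = h_0 ... h_k          (k >= 0)
                    = 1                     (k = -1)
                    = h_{k+1}^{-1} ... h_{-1}^{-1}  (k <= -2) *)
Definition prodZ (h : Z -> R) (k : Z) : R :=
  if (0 <=? k)%Z
  then prod_nat (fun i => h (Z.of_nat i)) (S (Z.to_nat k))
  else prod_nat (fun i => / h (- Z.of_nat (S i))%Z) (Z.to_nat (- k - 1)).

Fixpoint sum_nat (f : nat -> R) (n : nat) : R :=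
  match n with O => 0 | S n' => sum_nat f n' + f n' end.
Definition sumZ (f : Z -> R) (a b : Z) : R :=
  if (a <=? b)%Z
  then sum_nat (fun t => f (a + Z.of_nat t)%Z) (Z.to_nat (b - a))
  else - sum_nat (fun t => f (b + Z.of_nat t)%Z) (Z.to_nat (a - b)).

(* increments: m_{k+1}-m_k = prod_{i=0}^k (c_i(x)-1),
               n_k - n_{k+1} = x prod_{i=0}^k (d_i(x)-1),
   with c_i = c o s_i, d_i = d o s_i *)
Definition mincr (x : R) (k : Z) : R := prodZ (fun i => cf (sZ i x) - 1) k.
Definition nincr (x : R) (k : Z) : R := x * prodZ (fun i => df (sZ i x) - 1) k.

(* A solution of the increment equations (normalized by m_0 = n_0 = 0).
   It differs from m^def, n^def only by additive constants, which cancel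
   in the margin map. *)
Definition mseq (x : R) (k : Z) : R := sumZ (mincr x) 0 k.
Definition nseq (x : R) (k : Z) : R := - sumZ (nincr x) 0 k.

Definition Mina (p r : nat) (x : R) : R :=
  (nseq x (- Z.of_nat p) - nseq x (Z.of_nat r))
  / (mseq x (Z.of_nat r) - mseq x (- Z.of_nat p)).

(* Main.v *)
Require Import Defs.
From Stdlib Require Import Reals ZArith.
From Stdlib Require Import Lia Lra.
Open Scope R_scope.

Lemma omega_gt1 y : 0 < y -> 1 < omega y.
Proof. intros. unfold omega. rewrite <- sqrt_1 at 1. apply sqrt_lt_1_alt. lra. Qed.

Lemma omega_sq y : 0 <= y -> omega y ^ 2 = 8 * y + 1.
Proof. intros. unfold omega. simpl. rewrite Rmult_1_r. apply sqrt_sqrt. lra. Qed.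

Lemma y_of_omega y : 0 < y -> y = (omega y ^ 2 - 1) / 8.
Proof. intros. rewrite omega_sq by lra. field. Qed.

Lemma sf_pos y : 0 < y -> 0 < sf y.
Proof. intros. pose proof (omega_gt1 y H). unfold sf. apply Rdiv_lt_0_compat; nra. Qed.

Lemma omega_T y : 0 < y -> omega (/ sf y) = (omega y + 15) / (omega y - 1).
Proof.
  intros Hy. pose proof (omega_gt1 y Hy) as Hw.
  change (omega (/ sf y)) with (sqrt (8 * / sf y + 1)).
  replace (8 * / sf y + 1) with (((omega y + 15) / (omega y - 1)) ^ 2).
  - apply sqrt_pow2. left. apply Rdiv_lt_0_compat; lra.
  - unfold sf. set (w := omega y) in *. field. split; lra.
Qed.

Lemma idA y : 0 < y -> sf y * (cf y - 1) = y * (df y - 1).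
Proof.
  intros H. pose proof (omega_gt1 y H). pose proof (y_of_omega y H).
  unfold sf, cf, df. set (w := omega y) in *. clearbody w. subst y.
  field. split; lra.
Qed.

Lemma idB y : 0 < y -> sf (/ sf y) = / y.
Proof.
  intros H. pose proof (omega_gt1 y H). pose proof (y_of_omega y H).
  change (sf (/ sf y)) with ((omega (/ sf y) - 1) ^ 2 / (4 * (omega (/ sf y) + 7))).
  rewrite omega_T by auto.
  set (w := omega y) in *. clearbody w. subst y.
  field. repeat split; try lra; nra.
Qed.

Lemma idC y : 0 < y -> (df y - 1) * (cf (/ sf y) - 1) = 1.
Proof.
  intros H. pose proof (omega_gt1 y H).
  change (cf (/ sf y)) with ((omega (/ sf y) + 3) ^ 2 / 16).
  rewrite omega_T by auto. unfold df.
  set (w := omega y) in *. clearbody w.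
  field. repeat split; try lra; nra.
Qed.

Lemma idD y : 0 < y -> (cf y - 1) * (df (/ sf y) - 1) = 1.
Proof.
  intros H. pose proof (omega_gt1 y H).
  change (df (/ sf y)) with ((omega (/ sf y) + 3) ^ 2 / (8 * (omega (/ sf y) + 1))).
  rewrite omega_T by auto. unfold cf.
  set (w := omega y) in *. clearbody w.
  field. repeat split; try lra; nra.
Qed.

Lemma cf_gt y : 0 < y -> 0 < cf y - 1.
Proof.
  intros H. pose proof (omega_gt1 y H). unfold cf. set (w := omega y) in *.
  replace ((w + 3) ^ 2 / 16 - 1) with ((w - 1) * (w + 7) / 16) by field.
  apply Rdiv_lt_0_compat; nra.
Qed.

Lemma df_gt y : 0 < y -> 0 < df y - 1.
Proof.
  intros H. pose proof (omega_gt1 y H). unfold df. set (w := omega y) in *.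
  replace ((w + 3) ^ 2 / (8 * (w + 1)) - 1) with ((w - 1) ^ 2 / (8 * (w + 1))) by (field; lra).
  apply Rdiv_lt_0_compat; nra.
Qed.
Lemma Z_of_nat_or (k : Z) : exists n, k = Z.of_nat n \/ k = (- Z.of_nat (S n))%Z.
Proof.
  destruct (Z_le_gt_dec 0 k).
  - exists (Z.to_nat k). left. lia.
  - exists (Z.to_nat (- k - 1)). right. lia.
Qed.

Lemma iterR_pos f n x : (forall y, 0 < y -> 0 < f y) -> 0 < x -> 0 < iterR f n x.
Proof. intros Hf Hx. induction n; simpl; auto. Qed.

Lemma sm1_pos y : 0 < y -> 0 < sm1 y.
Proof. intros. unfold sm1. apply Rinv_0_lt_compat, sf_pos, Rinv_0_lt_compat; auto. Qed.

Lemma sZ_pos k x : 0 < x -> 0 < sZ k x.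
Proof.
  intros Hx. destruct k; simpl; auto; apply iterR_pos; auto.
  - apply sf_pos.
  - apply sm1_pos.
Qed.

Lemma sZ_nat n x : sZ (Z.of_nat n) x = iterR sf n x.
Proof. destruct n; simpl; auto. rewrite SuccNat2Pos.id_succ. reflexivity. Qed.

Lemma sZ_negnat n x : sZ (- Z.of_nat n) x = iterR sm1 n x.
Proof. destruct n; simpl; auto. rewrite SuccNat2Pos.id_succ. reflexivity. Qed.

Lemma sf_sm1 y : 0 < y -> sf (sm1 y) = y.
Proof. intros. unfold sm1. rewrite idB by (apply Rinv_0_lt_compat; auto). apply Rinv_inv. Qed.

Lemma sm1_sf y : 0 < y -> sm1 (sf y) = y.
Proof. intros. unfold sm1. rewrite idB by auto. apply Rinv_inv. Qed.

Lemma sZ_succ k x : 0 < x -> sZ (k + 1) x = sf (sZ k x).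
Proof.
  intros Hx. destruct (Z_of_nat_or k) as [n [-> | ->]].
  - replace (Z.of_nat n + 1)%Z with (Z.of_nat (S n)) by lia.
    rewrite !sZ_nat. reflexivity.
  - replace (- Z.of_nat (S n) + 1)%Z with (- Z.of_nat n)%Z by lia.
    rewrite !sZ_negnat. simpl. rewrite sf_sm1; auto.
    apply iterR_pos; auto. apply sm1_pos.
Qed.

Lemma sZ_pred k x : 0 < x -> sZ k x = sm1 (sZ (k + 1) x).
Proof.
  intros Hx. destruct (Z_of_nat_or k) as [n [-> | ->]].
  - replace (Z.of_nat n + 1)%Z with (Z.of_nat (S n)) by lia.
    rewrite !sZ_nat. simpl. rewrite sm1_sf; auto.
    apply iterR_pos; auto. apply sf_pos.
  - replace (- Z.of_nat (S n) + 1)%Z with (- Z.of_nat n)%Z by lia.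
    rewrite !sZ_negnat. reflexivity.
Qed.

Lemma seq_unique (F G : R -> R) (u v : Z -> R) :
  u 0%Z = v 0%Z -> (forall j, u (j + 1)%Z = F (u j)) -> (forall j, v (j + 1)%Z = F (v j)) ->
  (forall j, u j = G (u (j + 1)%Z)) -> (forall j, v j = G (v (j + 1)%Z)) ->
  forall j, u j = v j.
Proof.
  intros H0 H1 H2 H3 H4.
  assert (A : forall n : nat, u (Z.of_nat n) = v (Z.of_nat n) /\ u (- Z.of_nat n)%Z = v (- Z.of_nat n)%Z).
  { induction n as [|n [IH1 IH2]]; [simpl; auto|]. split.
    - replace (Z.of_nat (S n)) with (Z.of_nat n + 1)%Z by lia.
      rewrite H1, H2, IH1. reflexivity.
    - rewrite (H3 (- Z.of_nat (S n))%Z), (H4 (- Z.of_nat (S n))%Z).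
      replace (- Z.of_nat (S n) + 1)%Z with (- Z.of_nat n)%Z by lia.
      rewrite IH2. reflexivity. }
  intros j. destruct (Z_of_nat_or j) as [n [-> | ->]]; apply A.
Qed.

Lemma rec_unique (a f g : Z -> R) (j0 : Z) :
  (forall j, a j <> 0) -> (forall j, f j = f (j - 1)%Z * a j) -> (forall j, g j = g (j - 1)%Z * a j) ->
  forall j, f j * g j0 = f j0 * g j.
Proof.
  intros Ha Hf Hg.
  set (h := fun j => f j * g j0 - f j0 * g j).
  assert (Hh : forall j, h j = h (j - 1)%Z * a j).
  { intros j. unfold h. rewrite (Hf j), (Hg j). ring. }
  assert (Z0 : forall n : nat, h (j0 + Z.of_nat n)%Z = 0 /\ h (j0 - Z.of_nat n)%Z = 0).
  { induction n as [|n [IH1 IH2]].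
    - simpl. rewrite Z.add_0_r, Z.sub_0_r. unfold h. split; ring.
    - split.
      + rewrite Hh. replace (j0 + Z.of_nat (S n) - 1)%Z with (j0 + Z.of_nat n)%Z by lia.
        rewrite IH1. ring.
      + rewrite Hh in IH2. replace (j0 - Z.of_nat n - 1)%Z with (j0 - Z.of_nat (S n))%Z in IH2 by lia.
        destruct (Rmult_integral _ _ IH2) as [E|E]; auto. exfalso; eapply Ha; eauto. }
  intros j. assert (h j = 0).
  { destruct (Z_le_gt_dec j0 j).
    - replace j with (j0 + Z.of_nat (Z.to_nat (j - j0)))%Z by lia. apply Z0.
    - replace j with (j0 - Z.of_nat (Z.to_nat (j0 - j)))%Z by lia. apply Z0. }
  unfold h in H. lra.
Qed.

Lemma prod_nat_pos f n : (forall i, 0 < f i) -> 0 < prod_nat f n.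
Proof. intros. induction n; simpl; [lra|]. apply Rmult_lt_0_compat; auto. Qed.

Lemma prodZ_pos h k : (forall i, 0 < h i) -> 0 < prodZ h k.
Proof.
  intros. unfold prodZ. destruct (0 <=? k)%Z; apply prod_nat_pos; intros; auto.
  apply Rinv_0_lt_compat; auto.
Qed.

Lemma prodZ_rec h k : h k <> 0 -> prodZ h k = prodZ h (k - 1)%Z * h k.
Proof.
  intros Hk. destruct (Z_of_nat_or k) as [n [-> | ->]].
  - destruct n as [|m].
    + unfold prodZ. simpl. ring.
    + replace (Z.of_nat (S m) - 1)%Z with (Z.of_nat m) by lia.
      unfold prodZ. rewrite !(proj2 (Z.leb_le _ _)) by lia. rewrite !Nat2Z.id.
      reflexivity.
  - unfold prodZ. rewrite !(proj2 (Z.leb_gt _ _)) by lia.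
    replace (Z.to_nat (- - Z.of_nat (S n) - 1)) with n by lia.
    replace (Z.to_nat (- (- Z.of_nat (S n) - 1) - 1)) with (S n) by lia.
    change (prod_nat (fun i : nat => / h (- Z.of_nat (S i))%Z) (S n)) with
      (prod_nat (fun i : nat => / h (- Z.of_nat (S i))%Z) n * / h (- Z.of_nat (S n))%Z).
    field. auto.
Qed.

Lemma sum_nat_ext (f g : nat -> R) (n : nat) : (forall t : nat, lt t n -> f t = g t) -> Defs.sum_nat f n = Defs.sum_nat g n.
Proof. intros H. induction n; simpl; auto. rewrite IHn, H; auto. Qed.

Lemma sum_nat_split (f : nat -> R) (m n : nat) : Defs.sum_nat f (m + n) = Defs.sum_nat f m + Defs.sum_nat (fun t => f (m + t)%nat) n.
Proof. induction n; simpl. rewrite Nat.add_0_r. ring. rewrite Nat.add_succ_r. simpl. rewrite IHn. ring. Qed.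

Lemma sum_nat_shift (f : nat -> R) (n : nat) : Defs.sum_nat f (S n) = f 0%nat + Defs.sum_nat (fun t => f (S t)) n.
Proof.
  induction n. simpl. ring.
  change (Defs.sum_nat f (S (S n))) with (Defs.sum_nat f (S n) + f (S n)). rewrite IHn. simpl. ring.
Qed.

Lemma sum_nat_rev (f : nat -> R) (n : nat) : Defs.sum_nat f n = Defs.sum_nat (fun t => f (n - 1 - t)%nat) n.
Proof.
  induction n. reflexivity.
  rewrite (sum_nat_shift (fun t => f (S n - 1 - t)%nat)). replace (S n - 1 - 0)%nat with n by lia.
  change (Defs.sum_nat f (S n)) with (Defs.sum_nat f n + f n).
  rewrite IHn. rewrite Rplus_comm. f_equal. apply sum_nat_ext. intros. f_equal. lia.
Qed.

Lemma sum_nat_scale (c : R) (f : nat -> R) (n : nat) : Defs.sum_nat (fun t => c * f t) n = c * Defs.sum_nat f n.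
Proof. induction n; simpl. ring. rewrite IHn. ring. Qed.

Lemma sum_nat_pos (f : nat -> R) (n : nat) : (forall t, 0 < f t) -> (0 < n)%nat -> 0 < Defs.sum_nat f n.
Proof.
  intros H Hn. induction n. lia. simpl. destruct n. simpl. specialize (H 0%nat). lra.
  specialize (IHn ltac:(lia)). specialize (H (S n)). lra.
Qed.

Definition W (f : Z -> R) (p r : nat) : R :=
  Defs.sum_nat (fun t => f (- Z.of_nat p + Z.of_nat t)%Z) (p + r).

Lemma W_pos (F : Z -> R) (p r : nat) : (forall j, 0 < F j) -> (0 < p + r)%nat -> 0 < W F p r.
Proof. intros. unfold W. apply sum_nat_pos; auto. Qed.

Lemma sumZ_diff (f : Z -> R) (p r : nat) : sumZ f 0 (Z.of_nat r) - sumZ f 0 (- Z.of_nat p) = W f p r.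
Proof.
  assert (E1 : sumZ f 0 (Z.of_nat r) = Defs.sum_nat (fun t => f (Z.of_nat t)) r).
  { unfold sumZ. rewrite (proj2 (Z.leb_le 0 _)) by lia.
    replace (Z.to_nat (Z.of_nat r - 0)) with r by lia.
    apply sum_nat_ext; intros; f_equal; lia. }
  assert (E2 : sumZ f 0 (- Z.of_nat p) = - Defs.sum_nat (fun t => f (- Z.of_nat p + Z.of_nat t)%Z) p).
  { destruct p. unfold sumZ. simpl. ring.
    unfold sumZ. rewrite (proj2 (Z.leb_gt _ _)) by lia.
    replace (Z.to_nat (0 - - Z.of_nat (S p))) with (S p) by lia. reflexivity. }
  unfold W. rewrite sum_nat_split, E1, E2.
  assert (Defs.sum_nat (fun t => f (Z.of_nat t)) r =
          Defs.sum_nat (fun t => f (- Z.of_nat p + Z.of_nat (p + t))%Z) r).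
  { apply sum_nat_ext; intros; f_equal; lia. }
  rewrite H. ring.
Qed.

Lemma Mina_W p r x : Mina p r x = W (nincr x) p r / W (mincr x) p r.
Proof.
  unfold Mina, mseq, nseq. rewrite <- (sumZ_diff (mincr x)), <- (sumZ_diff (nincr x)).
  unfold Rdiv. f_equal. ring.
Qed.

Lemma W_refl (F G : Z -> R) (c : R) (e p r : nat) : (forall j, F j = c * G (- j - 1 - Z.of_nat e)%Z) ->
  W F (p + e) r = c * W G (r + e) p.
Proof.
  intros HF. unfold W. rewrite sum_nat_rev. rewrite <- sum_nat_scale.
  replace (r + e + p)%nat with (p + e + r)%nat by lia.
  apply sum_nat_ext; intros t Ht. rewrite HF. f_equal. f_equal. lia.
Qed.

Lemma mincr_rec (x : R) (k : Z) : 0 < x -> mincr x k = mincr x (k - 1)%Z * (cf (sZ k x) - 1).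
Proof. intros. unfold mincr. apply prodZ_rec. pose proof (cf_gt _ (sZ_pos k x H)). lra. Qed.

Lemma nincr_rec (x : R) (k : Z) : 0 < x -> nincr x k = nincr x (k - 1)%Z * (df (sZ k x) - 1).
Proof.
  intros. unfold nincr. rewrite prodZ_rec. ring. pose proof (df_gt _ (sZ_pos k x H)). lra.
Qed.

Lemma mincr_pos (x : R) (k : Z) : 0 < x -> 0 < mincr x k.
Proof. intros. unfold mincr. apply prodZ_pos. intros. apply cf_gt, sZ_pos; auto. Qed.

Lemma nincr_pos (x : R) (k : Z) : 0 < x -> 0 < nincr x k.
Proof.
  intros. unfold nincr. apply Rmult_lt_0_compat; auto. apply prodZ_pos. intros. apply df_gt, sZ_pos; auto.
Qed.

Lemma mincr_m1 x : mincr x (-1) = 1.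
Proof. reflexivity. Qed.
Lemma nincr_m1 x : nincr x (-1) = x.
Proof. unfold nincr. change (prodZ (fun i => df (sZ i x) - 1) (-1)) with 1. ring. Qed.
Lemma mincr_0 x : mincr x 0 = cf x - 1.
Proof. unfold mincr, prodZ. simpl. ring. Qed.
Lemma nincr_0 x : nincr x 0 = x * (df x - 1).
Proof. unfold nincr, prodZ. simpl. ring. Qed.

Lemma reflect_gen x x' (q : Z) : 0 < x -> 0 < x' ->
  (forall j, sZ j x' = / sf (sZ (q - j) x)) ->
  (forall j, mincr x' j * nincr x q = nincr x (q - j - 1)%Z) /\
  (forall j, nincr x' j * mincr x q = x' * mincr x (q - j - 1)%Z).
Proof.
  intros Hx Hx' Hs. split; intros j.
  - assert (H1 : forall i, cf (sZ i x') - 1 <> 0).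
    { intros i. pose proof (cf_gt _ (sZ_pos i x' Hx')). lra. }
    assert (H2 : forall i, mincr x' i = mincr x' (i - 1)%Z * (cf (sZ i x') - 1)).
    { intros i. apply mincr_rec; auto. }
    assert (H3 : forall i, nincr x (q - i - 1)%Z = nincr x (q - (i - 1) - 1)%Z * (cf (sZ i x') - 1)).
    { intros i. rewrite (nincr_rec x (q - (i - 1) - 1)) by auto.
      replace (q - (i - 1) - 1 - 1)%Z with (q - i - 1)%Z by lia.
      rewrite Hs. replace (q - (i - 1) - 1)%Z with (q - i)%Z by lia.
      rewrite Rmult_assoc, idC. ring. apply sZ_pos; auto. }
    pose proof (rec_unique (fun j => cf (sZ j x') - 1) (mincr x') (fun j => nincr x (q - j - 1)%Z) (-1) H1 H2 H3 j) as U.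
    cbv beta in U. replace (q - -1 - 1)%Z with q in U by lia. rewrite U, mincr_m1. ring.
  - assert (H1 : forall i, df (sZ i x') - 1 <> 0).
    { intros i. pose proof (df_gt _ (sZ_pos i x' Hx')). lra. }
    assert (H2 : forall i, nincr x' i = nincr x' (i - 1)%Z * (df (sZ i x') - 1)).
    { intros i. apply nincr_rec; auto. }
    assert (H3 : forall i, mincr x (q - i - 1)%Z = mincr x (q - (i - 1) - 1)%Z * (df (sZ i x') - 1)).
    { intros i. rewrite (mincr_rec x (q - (i - 1) - 1)) by auto.
      replace (q - (i - 1) - 1 - 1)%Z with (q - i - 1)%Z by lia.
      rewrite Hs. replace (q - (i - 1) - 1)%Z with (q - i)%Z by lia.
      rewrite Rmult_assoc, idD. ring. apply sZ_pos; auto. }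
    pose proof (rec_unique (fun j => df (sZ j x') - 1) (nincr x') (fun j => mincr x (q - j - 1)%Z) (-1) H1 H2 H3 j) as U.
    cbv beta in U. replace (q - -1 - 1)%Z with q in U by lia. rewrite U, nincr_m1. ring.
Qed.

Lemma sZ_refl x x' q : 0 < x -> 0 < x' -> x' = / sf (sZ q x) ->
  forall j, sZ j x' = / sf (sZ (q - j) x).
Proof.
  intros Hx Hx' H0.
  apply (seq_unique sf sm1 (fun j => sZ j x') (fun j => / sf (sZ (q - j) x))).
  - simpl. rewrite Z.sub_0_r. auto.
  - intros j. apply sZ_succ; auto.
  - intros j. rewrite idB by (apply sZ_pos; auto).
    replace (q - j)%Z with ((q - (j + 1)) + 1)%Z by lia. rewrite sZ_succ by auto. reflexivity.
  - intros j. apply sZ_pred; auto.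
  - intros j. unfold sm1. rewrite Rinv_inv.
    replace (q - j)%Z with ((q - (j + 1)) + 1)%Z by lia. rewrite sZ_succ by auto. reflexivity.
Qed.

Theorem mainTheorem18 :
  forall (k : nat), (1 <= k)%nat ->
  forall x : R, 0 < x ->
    Mina k k x * Mina k k (/ sf x) = 1 /\
    Mina (k + 1) k x * Mina (k + 1) k (/ x) = 1.
Proof.
  intros k Hk x Hx.
  assert (Wm1 : 0 < W (mincr x) k k) by (apply W_pos; [intros; apply mincr_pos; auto | lia]).
  assert (Wn1 : 0 < W (nincr x) k k) by (apply W_pos; [intros; apply nincr_pos; auto | lia]).
  assert (Wm2 : 0 < W (mincr x) (k + 1) k) by (apply W_pos; [intros; apply mincr_pos; auto | lia]).
  assert (Wn2 : 0 < W (nincr x) (k + 1) k) by (apply W_pos; [intros; apply nincr_pos; auto | lia]).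
  pose proof (sf_pos x Hx) as Hsx. pose proof (cf_gt x Hx) as Hc. pose proof (df_gt x Hx) as Hd.
  split.
  - set (x' := / sf x).
    assert (Hx' : 0 < x') by (apply Rinv_0_lt_compat; auto).
    assert (Hs := sZ_refl x x' 0 Hx Hx' eq_refl).
    destruct (reflect_gen x x' 0 Hx Hx' Hs) as [R1 R2].
    rewrite mincr_0, nincr_0 in *.
    assert (E1 : forall j, mincr x' j = / (x * (df x - 1)) * nincr x (- j - 1 - Z.of_nat 0)%Z).
    { intros j. replace (- j - 1 - Z.of_nat 0)%Z with (0 - j - 1)%Z by lia. rewrite <- R1.
      field. nra. }
    assert (E2 : forall j, nincr x' j = x' / (cf x - 1) * mincr x (- j - 1 - Z.of_nat 0)%Z).
    { intros j. replace (- j - 1 - Z.of_nat 0)%Z with (0 - j - 1)%Z by lia. apply (Rmult_eq_reg_r (cf x - 1)); [|lra].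
      rewrite R2. field. lra. }
    pose proof (W_refl _ _ _ 0 k k E1) as W1. pose proof (W_refl _ _ _ 0 k k E2) as W2.
    rewrite Nat.add_0_r in W1, W2.
    rewrite !Mina_W, W1, W2.
    pose proof (idA x Hx) as HA.
    unfold x'. replace (x * (df x - 1)) with (sf x * (cf x - 1)) by auto.
    field. repeat split; lra.
  - set (x' := / x).
    assert (Hx' : 0 < x') by (apply Rinv_0_lt_compat; auto).
    assert (H0 : x' = / sf (sZ (-1) x)).
    { unfold x'. simpl. rewrite sf_sm1; auto. }
    assert (Hs := sZ_refl x x' (-1) Hx Hx' H0).
    destruct (reflect_gen x x' (-1) Hx Hx' Hs) as [R1 R2].
    rewrite mincr_m1, nincr_m1 in *.
    assert (E1 : forall j, mincr x' j = / x * nincr x (- j - 1 - Z.of_nat 1)%Z).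
    { intros j. replace (- j - 1 - Z.of_nat 1)%Z with (-1 - j - 1)%Z by lia. rewrite <- R1.
      field. lra. }
    assert (E2 : forall j, nincr x' j = x' * mincr x (- j - 1 - Z.of_nat 1)%Z).
    { intros j. replace (- j - 1 - Z.of_nat 1)%Z with (-1 - j - 1)%Z by lia. rewrite <- R2.
      ring. }
    pose proof (W_refl _ _ _ 1 k k E1) as W1. pose proof (W_refl _ _ _ 1 k k E2) as W2.
    rewrite !Mina_W, W1, W2.
    unfold x'. field. repeat split; lra.
Qed.
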